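(* Let $\mathcal D$ be a preduoidal category and $T$ a separately opmonoidal monad on $\mathcal D$, and suppose $\mathcal D^T$, with its lifted monoidal structures $(\circ,(\bot,T^\circ_0))$ and $(\bullet,(1,T^\bullet_0))$, carries a duoidal structure with interchange law $\xi_{a,b,c,d}\colon (a\bullet b)\circ(c\bullet d)\to(a\circ c)\bullet(b\circ d)$ and structure morphisms $\nu,\varpi,\iota$. Then $\nu,\varpi,\iota$ together with $$R_{a,b,c,d} := \xi_{Ta,Tb,Tc,Td}\cdot\big((\eta_a\bullet\eta_b)\circ(\eta_c\bullet\eta_d)\big)\colon (a\bullet b)\circ(c\bullet d)\to(Ta\circ Tc)\bullet(Tb\circ Td),\quad a,b,c,d\in\mathcal D$$ (with $Ta$ the free $T$-algebra $(Ta,\mu_a)$) form an R-matrix on $T$.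
   Context: Composition of morphisms is written $g\cdot f$ ($f$ first). A preduoidal category is a category $\mathcal D$ with two monoidal structures $(\circ,\bot)$ and $(\bullet,1)$ (associators $\alpha$, unitors $\lambda^\circ,\rho^\circ,\lambda^\bullet,\rho^\bullet$). A bimonad on a monoidal category $(\mathcal C,\otimes,I)$ is a monad $(B,\mu,\eta)$ with an opmonoidal structure $B_2\colon B(x\otimes y)\to Bx\otimes By$, $B_0\colon BI\to I$ such that $\mu,\eta$ are opmonoidal. A separately opmonoidal monad on $\mathcal D$ is a monad $(T,\mu,\eta)$ with a bimonad structure $(T^\circ_2,T^\circ_0)$ on $(\mathcal D,\circ,\bot)$ and one $(T^\bullet_2,T^\bullet_0)$ on $(\mathcal D,\bullet,1)$. Lifted monoidal structures on $\mathcal D^T$: $(a,\alpha)\circ(b,\beta)=(a\circ b,(\alpha\circ\beta)\cdot T^\circ_{2,a,b})$, unit $(\bot,T^\circ_0)$; $(a,\alpha)\bullet(b,\beta)=(a\bullet b,(\alpha\bullet\beta)\cdot T^\bullet_{2,a,b})$, unit $(1,T^\bullet_0)$. Duoidal category: a preduoidal category with a natural transformation $\zeta_{x,y,a,b}\colon (x\bullet y)\circ(a\bullet b)\to(x\circ a)\bullet(y\circ b)$ and morphisms $\nu\colon\bot\to\bot\bullet\bot$, $\varpi\colon 1\circ 1\to 1$, $\iota\colon\bot\to 1$ such that $(1,\varpi,\iota)$ is a monoid in $(\mathcal D,\circ,\bot)$, $(\bot,\nu,\iota)$ is a comonoid in $(\mathcal D,\bullet,1)$, and: (A1) $(\alpha\bullet\alpha)\cdot\zeta_{x\circ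 a,y\circ b,c,d}\cdot(\zeta_{x,y,a,b}\circ\mathrm{id}) = \zeta_{x,y,a\circ c,b\circ d}\cdot(\mathrm{id}\circ\zeta_{a,b,c,d})\cdot\alpha$; (A2) $\alpha\cdot(\zeta_{x,a,y,b}\bullet\mathrm{id})\cdot\zeta_{x\bullet a,c,y\bullet b,d} = (\mathrm{id}\bullet\zeta_{a,c,b,d})\cdot\zeta_{x,a\bullet c,y,b\bullet d}\cdot(\alpha\circ\alpha)$; (U) $\zeta_{\bot,\bot,a,b}\cdot(\nu\circ\mathrm{id})=((\lambda^\circ_a)^{-1}\bullet(\lambda^\circ_b)^{-1})\cdot\lambda^\circ_{a\bullet b}$, $\zeta_{a,b,\bot,\bot}\cdot(\mathrm{id}\circ\nu)=((\rho^\circ_a)^{-1}\bullet(\rho^\circ_b)^{-1})\cdot\rho^\circ_{a\bullet b}$, $(\varpi\bullet\mathrm{id})\cdot\zeta_{1,a,1,b}=(\lambda^\bullet_{a\circ b})^{-1}\cdot(\lambda^\bullet_a\circ\lambda^\bullet_b)$, $(\mathrm{id}\bullet\varpi)\cdot\zeta_{a,1,b,1}=(\rho^\bullet_{a\circ b})^{-1}\cdot(\rho^\bullet_a\circ\rho^\bullet_b)$. A duoidal structure on $\mathcal D^T$ means such data for the lifted structures with $\xi$ a natural family of $T$-algebra morphisms and $\nu,\varpi,\iota$ morphisms of $T$-algebras. R-matrix on $T$: a natural transformation $R_{a,b,c,d}\colon (a\bullet b)\circ(c\bullet d)\to(Ta\circ Tc)\bullet(Tb\circ Td)$ together with morphisms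 of $T$-algebras $\nu\colon(\bot,T^\circ_0)\to(\bot,T^\circ_0)\bullet(\bot,T^\circ_0)$, $\varpi\colon(1,T^\bullet_0)\circ(1,T^\bullet_0)\to(1,T^\bullet_0)$, $\iota\colon(\bot,T^\circ_0)\to(1,T^\bullet_0)$, such that $(1,\varpi,\iota)$ is a monoid in $(\mathcal D^T,\circ,\bot)$, $(\bot,\nu,\iota)$ is a comonoid in $(\mathcal D^T,\bullet,1)$, and (associators suppressed): (R-unit) for all $T$-algebras $(a,\alpha),(b,\beta)$: $((T^\circ_0\circ\alpha)\bullet(T^\circ_0\circ\beta))\cdot R_{\bot,\bot,a,b}\cdot(\nu\circ\mathrm{id})=((\lambda^\circ_a)^{-1}\bullet(\lambda^\circ_b)^{-1})\cdot\lambda^\circ_{a\bullet b}$; $((\alpha\circ T^\circ_0)\bullet(\beta\circ T^\circ_0))\cdot R_{a,b,\bot,\bot}\cdot(\mathrm{id}\circ\nu)=((\rho^\circ_a)^{-1}\bullet(\rho^\circ_b)^{-1})\cdot\rho^\circ_{a\bullet b}$; $(\varpi\bullet\mathrm{id})\cdot((T^\bullet_0\circ T^\bullet_0)\bullet(\alpha\circ\beta))\cdot R_{1,a,1,b}=(\lambda^\bullet_{a\circ b})^{-1}\cdot(\lambda^\bullet_a\circ\lambda^\bullet_b)$; $(\mathrm{id}\bullet\varpi)\cdot((\alpha\circ\beta)\bullet(T^\bullet_0\circ T^\bullet_0))\cdot R_{a,1,b,1}=(\rho^\bullet_{a\circ b})^{-1}\cdot(\rho^\bullet_a\circ\rho^\bullet_b)$.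 (R-lift) for all objects: $((\mu_a\circ\mu_c)\bullet(\mu_b\circ\mu_d))\cdot R_{Ta,Tb,Tc,Td}\cdot(T^\bullet_{2,a,b}\circ T^\bullet_{2,c,d})\cdot T^\circ_{2,a\bullet b,c\bullet d} = ((\mu_a\circ\mu_c)\bullet(\mu_b\circ\mu_d))\cdot(T^\circ_{2,Ta,Tc}\bullet T^\circ_{2,Tb,Td})\cdot T^\bullet_{2,Ta\circ Tc,Tb\circ Td}\cdot TR_{a,b,c,d}$. (R-1) for all objects: $((\mu_a\circ\mu_c\circ Tx)\bullet(\mu_b\circ\mu_d\circ Ty))\cdot((T^\circ_{2,Ta,Tc}\circ Tx)\bullet(T^\circ_{2,Tb,Td}\circ Ty))\cdot R_{Ta\circ Tc,Tb\circ Td,x,y}\cdot(R_{a,b,c,d}\circ\mathrm{id}) = ((Ta\circ\mu_c\circ\mu_x)\bullet(Tb\circ\mu_d\circ\mu_y))\cdot((Ta\circ T^\circ_{2,Tc,Tx})\bullet(Tb\circ T^\circ_{2,Td,Ty}))\cdot R_{a,b,Tc\circ Tx,Td\circ Ty}\cdot(\mathrm{id}\circ R_{c,d,x,y})$. (R-2) for all objects: $(((\mu_x\circ\mu_y)\bullet(\mu_a\circ\mu_b))\bullet\mathrm{id})\cdot(R_{Tx,Ta,Ty,Tb}\bullet\mathrm{id})\cdot((T^\bullet_{2,x,a}\circ T^\bullet_{2,y,b})\bullet\mathrm{id})\cdot R_{x\bullet a,c,y\bullet b,d} = (\mathrm{id}\bullet((\mu_a\circ\mu_b)\bullet(\mu_c\circ\mu_d)))\cdot(\mathrm{id}\bullet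 R_{Ta,Tc,Tb,Td})\cdot(\mathrm{id}\bullet(T^\bullet_{2,a,c}\circ T^\bullet_{2,b,d}))\cdot R_{x,a\bullet c,y,b\bullet d}\cdot(\alpha\circ\alpha)$. *)

(* Defs.v *)
From Stdlib Require Import Utf8.
Set Implicit Arguments.
Unset Strict Implicit.

Record Category := {
  Obj : Type;
  Hom : Obj -> Obj -> Type;
  idm : forall x, Hom x x;
  comp : forall x y z, Hom y z -> Hom x y -> Hom x z;
  comp_assoc : forall x y z w (h : Hom z w) (g : Hom y z) (f : Hom x y),
      comp h (comp g f) = comp (comp h g) f;
  comp_idl : forall x y (f : Hom x y), comp (idm y) f = f;
  comp_idr : forall x y (f : Hom x y), comp f (idm x) = f }.
Arguments Hom {c} _ _.
Arguments idm {c} x.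
Arguments comp {c x y z} _ _.
Arguments comp_assoc {c x y z w} h g f.
Arguments comp_idl {c x y} f.
Arguments comp_idr {c x y} f.

Notation "g · f" := (comp g f) (at level 45, left associativity).

Record MonoidalData (C : Category) := {
  tens : Obj C -> Obj C -> Obj C;
  tensm : forall x x' y y', Hom x x' -> Hom y y' -> Hom (tens x y) (tens x' y');
  munit : Obj C;
  assoc : forall x y z, Hom (tens (tens x y) z) (tens x (tens y z));
  assoc_inv : forall x y z, Hom (tens x (tens y z)) (tens (tens x y) z);
  lunit : forall x, Hom (tens munit x) x;
  lunit_inv : forall x, Hom x (tens munit x);
  runit : forall x, Hom (tens x munit) x;
  runit_inv : forall x, Hom x (tens x munit) }.
Arguments tens {C} _ x y.
Arguments tensm {C} _ {x x' y y'} _ _.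
Arguments munit {C} _.
Arguments assoc {C} _ x y z.
Arguments assoc_inv {C} _ x y z.
Arguments lunit {C} _ x.
Arguments lunit_inv {C} _ x.
Arguments runit {C} _ x.
Arguments runit_inv {C} _ x.

Record MonoidalLaws (C : Category) (M : MonoidalData C) : Prop := {
  ml_tens_id : forall x y, tensm M (idm x) (idm y) = idm (tens M x y);
  ml_tens_comp : forall x x' x'' y y' y'' (f : Hom x x') (f' : Hom x' x'')
      (g : Hom y y') (g' : Hom y' y''),
      tensm M (f' · f) (g' · g) = tensm M f' g' · tensm M f g;
  ml_assoc_iso1 : forall x y z, assoc_inv M x y z · assoc M x y z = idm _;
  ml_assoc_iso2 : forall x y z, assoc M x y z · assoc_inv M x y z = idm _;
  ml_lunit_iso1 : forall x, lunit_inv M x · lunit M x = idm _;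
  ml_lunit_iso2 : forall x, lunit M x · lunit_inv M x = idm _;
  ml_runit_iso1 : forall x, runit_inv M x · runit M x = idm _;
  ml_runit_iso2 : forall x, runit M x · runit_inv M x = idm _;
  ml_assoc_nat : forall x x' y y' z z' (f : Hom x x') (g : Hom y y') (h : Hom z z'),
      assoc M x' y' z' · tensm M (tensm M f g) h
      = tensm M f (tensm M g h) · assoc M x y z;
  ml_lunit_nat : forall x x' (f : Hom x x'),
      lunit M x' · tensm M (idm (munit M)) f = f · lunit M x;
  ml_runit_nat : forall x x' (f : Hom x x'),
      runit M x' · tensm M f (idm (munit M)) = f · runit M x;
  ml_pentagon : forall x y z w,
      assoc M x y (tens M z w) · assoc M (tens M x y) z w
      = tensm M (idm x) (assoc M y z w) · assoc M x (tens M y z) w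
        · tensm M (assoc M x y z) (idm w);
  ml_triangle : forall x y,
      tensm M (idm x) (lunit M y) · assoc M x (munit M) y
      = tensm M (runit M x) (idm y) }.

Record Monoidal (C : Category) := {
  mdata :> MonoidalData C;
  mlaws : MonoidalLaws mdata }.

Record Preduoidal := {
  pcat :> Category;
  circ : Monoidal pcat;
  bull : Monoidal pcat }.

Record MonadData (C : Category) := {
  mobj : Obj C -> Obj C;
  mmap : forall x y, Hom x y -> Hom (mobj x) (mobj y);
  mu : forall x, Hom (mobj (mobj x)) (mobj x);
  eta : forall x, Hom x (mobj x) }.
Arguments mobj {C} _ _.
Arguments mmap {C} _ {x y} _.
Arguments mu {C} _ _.
Arguments eta {C} _ _.

Record MonadLaws (C : Category) (T : MonadData C) : Prop := {
  mo_map_id : forall x, mmap T (idm x) = idm (mobj T x);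
  mo_map_comp : forall x y z (g : Hom y z) (f : Hom x y),
      mmap T (g · f) = mmap T g · mmap T f;
  mo_mu_nat : forall x y (f : Hom x y),
      mu T y · mmap T (mmap T f) = mmap T f · mu T x;
  mo_eta_nat : forall x y (f : Hom x y), eta T y · f = mmap T f · eta T x;
  mo_assoc : forall x, mu T x · mmap T (mu T x) = mu T x · mu T (mobj T x);
  mo_unit_l : forall x, mu T x · eta T (mobj T x) = idm (mobj T x);
  mo_unit_r : forall x, mu T x · mmap T (eta T x) = idm (mobj T x) }.

Record Monad (C : Category) := {
  mondata :> MonadData C;
  monlaws : MonadLaws mondata }.

(* Bimonad structure (opmonoidal structure making μ, η opmonoidal). *)
Record BimonadData (C : Category) (M : Monoidal C) (T : Monad C) := {
  T2 : forall x y, Hom (mobj T (tens M x y)) (tens M (mobj T x) (mobj T y));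
  T0 : Hom (mobj T (munit M)) (munit M) }.
Arguments T2 {C M T} _ _ _.
Arguments T0 {C M T} _.

Record BimonadLaws (C : Category) (M : Monoidal C) (T : Monad C)
    (B : BimonadData M T) : Prop := {
  bi_T2_nat : forall x x' y y' (f : Hom x x') (g : Hom y y'),
      T2 B x' y' · mmap T (tensm M f g) = tensm M (mmap T f) (mmap T g) · T2 B x y;
  bi_coassoc : forall x y z,
      assoc M (mobj T x) (mobj T y) (mobj T z) · tensm M (T2 B x y) (idm (mobj T z))
        · T2 B (tens M x y) z
      = tensm M (idm (mobj T x)) (T2 B y z) · T2 B x (tens M y z)
        · mmap T (assoc M x y z);
  bi_counit_l : forall x,
      lunit M (mobj T x) · tensm M (T0 B) (idm (mobj T x)) · T2 B (munit M) x
      = mmap T (lunit M x);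
  bi_counit_r : forall x,
      runit M (mobj T x) · tensm M (idm (mobj T x)) (T0 B) · T2 B x (munit M)
      = mmap T (runit M x);
  bi_mu2 : forall x y,
      T2 B x y · mu T (tens M x y)
      = tensm M (mu T x) (mu T y) · T2 B (mobj T x) (mobj T y) · mmap T (T2 B x y);
  bi_mu0 : T0 B · mu T (munit M) = T0 B · mmap T (T0 B);
  bi_eta2 : forall x y, T2 B x y · eta T (tens M x y) = tensm M (eta T x) (eta T y);
  bi_eta0 : T0 B · eta T (munit M) = idm (munit M) }.

Record Bimonad (C : Category) (M : Monoidal C) (T : Monad C) := {
  bidata :> BimonadData M T;
  bilaws : BimonadLaws bidata }.

Record SepOpMonad (D : Preduoidal) := {
  smon :> Monad D;
  sbc : Bimonad (circ D) smon;
  sbb : Bimonad (bull D) smon }.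

Section Algebras.
Variables (C : Category) (T : Monad C).

Record Alg := {
  acar : Obj C;
  aact : Hom (mobj T acar) acar;
  a_unit : aact · eta T acar = idm acar;
  a_assoc : aact · mmap T aact = aact · mu T acar }.

Definition is_alg_hom (A B : Alg) (f : Hom (acar A) (acar B)) : Prop :=
  f · aact A = aact B · mmap T f.

Lemma free_alg_unit x : mu T x · eta T (mobj T x) = idm (mobj T x).
Proof. exact (mo_unit_l (monlaws T) x). Qed.
Lemma free_alg_assoc x : mu T x · mmap T (mu T x) = mu T x · mu T (mobj T x).
Proof. exact (mo_assoc (monlaws T) x). Qed.

Definition free_alg (x : Obj C) : Alg :=
  {| acar := mobj T x; aact := mu T x;
     a_unit := free_alg_unit x; a_assoc := free_alg_assoc x |}.

Variables (M : Monoidal C) (B : Bimonad M T).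

Lemma alg_unit_unit : T0 B · eta T (munit M) = idm (munit M).
Proof. exact (bi_eta0 (bilaws B)). Qed.
Lemma alg_unit_assoc : T0 B · mmap T (T0 B) = T0 B · mu T (munit M).
Proof. symmetry; exact (bi_mu0 (bilaws B)). Qed.

Definition alg_unit : Alg :=
  {| acar := munit M; aact := T0 B;
     a_unit := alg_unit_unit; a_assoc := alg_unit_assoc |}.

Lemma alg_tens_unit (A A' : Alg) :
  tensm M (aact A) (aact A') · T2 B (acar A) (acar A') · eta T (tens M (acar A) (acar A'))
  = idm (tens M (acar A) (acar A')).
Proof.
  rewrite <- comp_assoc, (bi_eta2 (bilaws B)), <- (ml_tens_comp (mlaws M)),
    !a_unit; exact (ml_tens_id (mlaws M) _ _).
Qed.

Lemma alg_tens_assoc (A A' : Alg) :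
  tensm M (aact A) (aact A') · T2 B (acar A) (acar A')
    · mmap T (tensm M (aact A) (aact A') · T2 B (acar A) (acar A'))
  = tensm M (aact A) (aact A') · T2 B (acar A) (acar A')
    · mu T (tens M (acar A) (acar A')).
Proof.
  pose proof (monlaws T) as HT; pose proof (mlaws M) as HM; pose proof (bilaws B) as HB.
  rewrite (mo_map_comp HT), !comp_assoc.
  rewrite <- (comp_assoc _ (T2 B _ _) (mmap T _)), (bi_T2_nat HB), comp_assoc.
  rewrite <- (ml_tens_comp HM), !a_assoc, (ml_tens_comp HM).
  rewrite <- !comp_assoc, (bi_mu2 HB), !comp_assoc. reflexivity.
Qed.

Definition alg_tens (A A' : Alg) : Alg :=
  {| acar := tens M (acar A) (acar A');
     aact := tensm M (aact A) (aact A') · T2 B (acar A) (acar A');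
     a_unit := alg_tens_unit A A'; a_assoc := alg_tens_assoc A A' |}.

End Algebras.
Arguments is_alg_hom {C T} A B f.
Arguments free_alg {C} T x.
Arguments alg_unit {C T M} B.
Arguments alg_tens {C T M} B A A'.

Section DuoidalLift.
Variables (D : Preduoidal) (T : SepOpMonad D).

Local Notation co := (tens (circ D)).
Local Notation ct := (tensm (circ D)).
Local Notation Bot := (munit (circ D)).
Local Notation cassoc := (assoc (circ D)).
Local Notation clunit := (lunit (circ D)).
Local Notation clunit_inv := (lunit_inv (circ D)).
Local Notation crunit := (runit (circ D)).
Local Notation crunit_inv := (runit_inv (circ D)).
Local Notation bo := (tens (bull D)).
Local Notation bt := (tensm (bull D)).
Local Notation One := (munit (bull D)).
Local Notation bassoc := (assoc (bull D)).
Local Notation blunit := (lunit (bull D)).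
Local Notation blunit_inv := (lunit_inv (bull D)).
Local Notation brunit := (runit (bull D)).
Local Notation brunit_inv := (runit_inv (bull D)).
Local Notation Tt := (mobj T).
Local Notation Tf := (mmap T).
Local Notation muT := (mu T).
Local Notation etaT := (eta T).
Local Notation T2c := (T2 (sbc T)).
Local Notation T0c := (T0 (sbc T)).
Local Notation T2b := (T2 (sbb T)).
Local Notation T0b := (T0 (sbb T)).
Local Notation actens := (alg_tens (sbc T)).
Local Notation acunit := (alg_unit (sbc T)).
Local Notation abtens := (alg_tens (sbb T)).
Local Notation abunit := (alg_unit (sbb T)).

Definition XiType : Type :=
  forall A B C E : Alg T,
    Hom (co (bo (acar A) (acar B)) (bo (acar C) (acar E)))
        (bo (co (acar A) (acar C)) (co (acar B) (acar E))).

Definition RType : Type :=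
  forall a b c d : Obj D,
    Hom (co (bo a b) (bo c d)) (bo (co (Tt a) (Tt c)) (co (Tt b) (Tt d))).

Record UnitData (nu : Hom Bot (bo Bot Bot)) (varpi : Hom (co One One) One)
    (iota : Hom Bot One) : Prop := {
  ud_nu_alg : is_alg_hom acunit (abtens acunit acunit) nu;
  ud_varpi_alg : is_alg_hom (actens abunit abunit) abunit varpi;
  ud_iota_alg : is_alg_hom acunit abunit iota;
  ud_mon_assoc : varpi · ct varpi (idm One)
                 = varpi · ct (idm One) varpi · cassoc One One One;
  ud_mon_unit_l : varpi · ct iota (idm One) = clunit One;
  ud_mon_unit_r : varpi · ct (idm One) iota = crunit One;
  ud_comon_assoc : bassoc Bot Bot Bot · bt nu (idm Bot) · nu
                   = bt (idm Bot) nu · nu;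
  ud_comon_unit_l : blunit Bot · bt iota (idm Bot) · nu = idm Bot;
  ud_comon_unit_r : brunit Bot · bt (idm Bot) iota · nu = idm Bot }.

Record DuoidalLift (xi : XiType) (nu : Hom Bot (bo Bot Bot))
    (varpi : Hom (co One One) One) (iota : Hom Bot One) : Prop := {
  dl_units : UnitData nu varpi iota;
  dl_xi_alg : forall A B C E : Alg T,
      is_alg_hom (actens (abtens A B) (abtens C E))
                 (abtens (actens A C) (actens B E)) (xi A B C E);
  dl_xi_nat : forall (A A' B B' C C' E E' : Alg T)
      (f : Hom (acar A) (acar A')) (g : Hom (acar B) (acar B'))
      (h : Hom (acar C) (acar C')) (k : Hom (acar E) (acar E')),
      is_alg_hom A A' f -> is_alg_hom B B' g ->
      is_alg_hom C C' h -> is_alg_hom E E' k ->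
      xi A' B' C' E' · ct (bt f g) (bt h k) = bt (ct f h) (ct g k) · xi A B C E;
  dl_A1 : forall X Y A B C E : Alg T,
      bt (cassoc (acar X) (acar A) (acar C)) (cassoc (acar Y) (acar B) (acar E))
        · xi (actens X A) (actens Y B) C E
        · ct (xi X Y A B) (idm (bo (acar C) (acar E)))
      = xi X Y (actens A C) (actens B E)
        · ct (idm (bo (acar X) (acar Y))) (xi A B C E)
        · cassoc (bo (acar X) (acar Y)) (bo (acar A) (acar B)) (bo (acar C) (acar E));
  dl_A2 : forall X A Y B C E : Alg T,
      bassoc (co (acar X) (acar Y)) (co (acar A) (acar B)) (co (acar C) (acar E))
        · bt (xi X A Y B) (idm (co (acar C) (acar E)))
        · xi (abtens X A) C (abtens Y B) E
      = bt (idm (co (acar X) (acar Y))) (xi A C B E)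
        · xi X (abtens A C) Y (abtens B E)
        · ct (bassoc (acar X) (acar A) (acar C)) (bassoc (acar Y) (acar B) (acar E));
  dl_U1 : forall A B : Alg T,
      xi acunit acunit A B · ct nu (idm (bo (acar A) (acar B)))
      = bt (clunit_inv (acar A)) (clunit_inv (acar B)) · clunit (bo (acar A) (acar B));
  dl_U2 : forall A B : Alg T,
      xi A B acunit acunit · ct (idm (bo (acar A) (acar B))) nu
      = bt (crunit_inv (acar A)) (crunit_inv (acar B)) · crunit (bo (acar A) (acar B));
  dl_U3 : forall A B : Alg T,
      bt varpi (idm (co (acar A) (acar B))) · xi abunit A abunit B
      = blunit_inv (co (acar A) (acar B)) · ct (blunit (acar A)) (blunit (acar B));
  dl_U4 : forall A B : Alg T,
      bt (idm (co (acar A) (acar B))) varpi · xi A abunit B abunit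
      = brunit_inv (co (acar A) (acar B)) · ct (brunit (acar A)) (brunit (acar B)) }.

(* An R-matrix on T (associators inserted where the paper suppresses them). *)
Record RMatrix (R : RType) (nu : Hom Bot (bo Bot Bot))
    (varpi : Hom (co One One) One) (iota : Hom Bot One) : Prop := {
  rm_units : UnitData nu varpi iota;
  rm_nat : forall a a' b b' c c' d d' (f : Hom a a') (g : Hom b b')
      (h : Hom c c') (k : Hom d d'),
      R a' b' c' d' · ct (bt f g) (bt h k)
      = bt (ct (Tf f) (Tf h)) (ct (Tf g) (Tf k)) · R a b c d;
  rm_unit1 : forall A B : Alg T,
      bt (ct T0c (aact A)) (ct T0c (aact B)) · R Bot Bot (acar A) (acar B)
        · ct nu (idm (bo (acar A) (acar B)))
      = bt (clunit_inv (acar A)) (clunit_inv (acar B)) · clunit (bo (acar A) (acar B));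
  rm_unit2 : forall A B : Alg T,
      bt (ct (aact A) T0c) (ct (aact B) T0c) · R (acar A) (acar B) Bot Bot
        · ct (idm (bo (acar A) (acar B))) nu
      = bt (crunit_inv (acar A)) (crunit_inv (acar B)) · crunit (bo (acar A) (acar B));
  rm_unit3 : forall A B : Alg T,
      bt varpi (idm (co (acar A) (acar B)))
        · bt (ct T0b T0b) (ct (aact A) (aact B)) · R One (acar A) One (acar B)
      = blunit_inv (co (acar A) (acar B)) · ct (blunit (acar A)) (blunit (acar B));
  rm_unit4 : forall A B : Alg T,
      bt (idm (co (acar A) (acar B))) varpi
        · bt (ct (aact A) (aact B)) (ct T0b T0b) · R (acar A) One (acar B) One
      = brunit_inv (co (acar A) (acar B)) · ct (brunit (acar A)) (brunit (acar B));
  rm_lift : forall a b c d,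
      bt (ct (muT a) (muT c)) (ct (muT b) (muT d)) · R (Tt a) (Tt b) (Tt c) (Tt d)
        · ct (T2b a b) (T2b c d) · T2c (bo a b) (bo c d)
      = bt (ct (muT a) (muT c)) (ct (muT b) (muT d))
        · bt (T2c (Tt a) (Tt c)) (T2c (Tt b) (Tt d))
        · T2b (co (Tt a) (Tt c)) (co (Tt b) (Tt d)) · Tf (R a b c d);
  rm_1 : forall a b c d x y,
      bt (cassoc (Tt a) (Tt c) (Tt x)) (cassoc (Tt b) (Tt d) (Tt y))
        · bt (ct (ct (muT a) (muT c)) (idm (Tt x))) (ct (ct (muT b) (muT d)) (idm (Tt y)))
        · bt (ct (T2c (Tt a) (Tt c)) (idm (Tt x))) (ct (T2c (Tt b) (Tt d)) (idm (Tt y)))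
        · R (co (Tt a) (Tt c)) (co (Tt b) (Tt d)) x y
        · ct (R a b c d) (idm (bo x y))
      = bt (ct (idm (Tt a)) (ct (muT c) (muT x))) (ct (idm (Tt b)) (ct (muT d) (muT y)))
        · bt (ct (idm (Tt a)) (T2c (Tt c) (Tt x))) (ct (idm (Tt b)) (T2c (Tt d) (Tt y)))
        · R a b (co (Tt c) (Tt x)) (co (Tt d) (Tt y))
        · ct (idm (bo a b)) (R c d x y)
        · cassoc (bo a b) (bo c d) (bo x y);
  rm_2 : forall x a y b c d,
      bassoc (co (Tt x) (Tt y)) (co (Tt a) (Tt b)) (co (Tt c) (Tt d))
        · bt (bt (ct (muT x) (muT y)) (ct (muT a) (muT b))) (idm (co (Tt c) (Tt d)))
        · bt (R (Tt x) (Tt a) (Tt y) (Tt b)) (idm (co (Tt c) (Tt d)))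
        · bt (ct (T2b x a) (T2b y b)) (idm (co (Tt c) (Tt d)))
        · R (bo x a) c (bo y b) d
      = bt (idm (co (Tt x) (Tt y))) (bt (ct (muT a) (muT b)) (ct (muT c) (muT d)))
        · bt (idm (co (Tt x) (Tt y))) (R (Tt a) (Tt c) (Tt b) (Tt d))
        · bt (idm (co (Tt x) (Tt y))) (ct (T2b a c) (T2b b d))
        · R x (bo a c) y (bo b d)
        · ct (bassoc x a c) (bassoc y b d) }.

Definition R_of_xi (xi : XiType) : RType :=
  fun a b c d =>
    xi (free_alg T a) (free_alg T b) (free_alg T c) (free_alg T d)
      · ct (bt (etaT a) (etaT b)) (bt (etaT c) (etaT d)).

End DuoidalLift.

(* Main.v *)
Require Import Defs.

Section Proof.
Variables (D : Preduoidal) (T : SepOpMonad D).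
Local Notation co := (tens (circ D)).
Local Notation ct := (tensm (circ D)).
Local Notation Bot := (munit (circ D)).
Local Notation cassoc := (assoc (circ D)).
Local Notation bo := (tens (bull D)).
Local Notation bt := (tensm (bull D)).
Local Notation One := (munit (bull D)).
Local Notation bassoc := (assoc (bull D)).
Local Notation Tt := (mobj T).
Local Notation Tf := (mmap T).
Local Notation muT := (mu T).
Local Notation etaT := (eta T).
Local Notation T2c := (T2 (sbc T)).
Local Notation T0c := (T0 (sbc T)).
Local Notation T2b := (T2 (sbb T)).
Local Notation T0b := (T0 (sbb T)).
Local Notation actens := (alg_tens (sbc T)).
Local Notation acunit := (alg_unit (sbc T)).
Local Notation abtens := (alg_tens (sbb T)).
Local Notation abunit := (alg_unit (sbb T)).
Local Notation F := (free_alg T).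

Lemma tail {x y z w : Obj D} (X : Hom y z) (Y : Hom x y) (Z : Hom x z) :
  X · Y = Z -> forall (W : Hom w x), X · (Y · W) = Z · W.
Proof. intros H W. rewrite comp_assoc, H. reflexivity. Qed.

Lemma ctc {x x' x'' y y' y''} (f : Hom x x') (f' : Hom x' x'') (g : Hom y y') (g' : Hom y' y'') :
  ct f' g' · ct f g = ct (f' · f) (g' · g).
Proof. symmetry; apply (ml_tens_comp (mlaws (circ D))). Qed.
Lemma btc {x x' x'' y y' y''} (f : Hom x x') (f' : Hom x' x'') (g : Hom y y') (g' : Hom y' y'') :
  bt f' g' · bt f g = bt (f' · f) (g' · g).
Proof. symmetry; apply (ml_tens_comp (mlaws (bull D))). Qed.
Lemma cid x y : ct (idm x) (idm y) = idm (co x y).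
Proof. apply (ml_tens_id (mlaws (circ D))). Qed.
Lemma bid x y : bt (idm x) (idm y) = idm (bo x y).
Proof. apply (ml_tens_id (mlaws (bull D))). Qed.

Lemma ah_act (A : Alg T) : is_alg_hom (F (acar A)) A (aact A).
Proof. unfold is_alg_hom; simpl. symmetry; apply a_assoc. Qed.
Lemma ah_mu a : is_alg_hom (F (Tt a)) (F a) (muT a).
Proof. unfold is_alg_hom; simpl. symmetry; apply (mo_assoc (monlaws T)). Qed.
Lemma ah_Tf a b (f : Hom a b) : is_alg_hom (F a) (F b) (Tf f).
Proof. unfold is_alg_hom; simpl. symmetry; apply (mo_mu_nat (monlaws T)). Qed.
Lemma ah_id (A : Alg T) : is_alg_hom A A (idm _).
Proof. unfold is_alg_hom. rewrite comp_idl, (mo_map_id (monlaws T)), comp_idr. reflexivity. Qed.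
Lemma ah_T0c : is_alg_hom (F Bot) (alg_unit (sbc T)) T0c.
Proof. unfold is_alg_hom; simpl. apply (bi_mu0 (bilaws (sbc T))). Qed.
Lemma ah_T0b : is_alg_hom (F One) (alg_unit (sbb T)) T0b.
Proof. unfold is_alg_hom; simpl. apply (bi_mu0 (bilaws (sbb T))). Qed.
Lemma ah_T2b x y : is_alg_hom (F (bo x y)) (abtens (F x) (F y)) (T2b x y).
Proof. unfold is_alg_hom; simpl. apply (bi_mu2 (bilaws (sbb T))). Qed.

Lemma munit_l a : muT a · etaT (Tt a) = idm _.
Proof. apply (mo_unit_l (monlaws T)). Qed.
Lemma aunit (A : Alg T) : aact A · etaT (acar A) = idm _.
Proof. apply a_unit. Qed.

Variables (xi : XiType T)
    (nu : Hom Bot (bo Bot Bot)) (varpi : Hom (co One One) One) (iota : Hom Bot One).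
Hypothesis H : DuoidalLift xi nu varpi iota.

Lemma xin (A A' B B' C C' E E' : Alg T)
      (f : Hom (acar A) (acar A')) (g : Hom (acar B) (acar B'))
      (h : Hom (acar C) (acar C')) (k : Hom (acar E) (acar E')) :
      is_alg_hom A A' f -> is_alg_hom B B' g ->
      is_alg_hom C C' h -> is_alg_hom E E' k ->
      bt (ct f h) (ct g k) · xi A B C E = xi A' B' C' E' · ct (bt f g) (bt h k).
Proof. intros; symmetry; apply (dl_xi_nat H); assumption. Qed.

Local Notation R := (R_of_xi xi).

Ltac ahs := first [apply ah_Tf | apply ah_mu | apply ah_act | apply ah_id | apply ah_T0c | apply ah_T0b | apply ah_T2b].
Ltac xrw_ A A' B B' C C' E E' f g h k :=
  let Hx := fresh in
  pose proof (xin A A' B B' C C' E E' f g h k ltac:(ahs) ltac:(ahs) ltac:(ahs) ltac:(ahs)) as Hx;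
  cbn [acar aact free_alg alg_unit alg_tens] in Hx |- *; rewrite Hx; clear Hx.
Ltac xrwl_ A A' B B' C C' E E' f g h k :=
  let Hx := fresh in
  pose proof (xin A A' B B' C C' E E' f g h k ltac:(ahs) ltac:(ahs) ltac:(ahs) ltac:(ahs)) as Hx;
  cbn [acar aact free_alg alg_unit alg_tens] in Hx |- *; rewrite <- Hx; clear Hx.
Tactic Notation "xrw" constr(A) constr(A') constr(B) constr(B') constr(C) constr(C') constr(E) constr(E') constr(f) constr(g) constr(h) constr(k) := xrw_ A A' B B' C C' E E' f g h k.
Tactic Notation "xrwl" constr(A) constr(A') constr(B) constr(B') constr(C) constr(C') constr(E) constr(E') constr(f) constr(g) constr(h) constr(k) := xrwl_ A A' B B' C C' E E' f g h k.

Lemma xi_free_act (A B C E : Alg T) :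
  bt (ct (aact A) (aact C)) (ct (aact B) (aact E)) · R (acar A) (acar B) (acar C) (acar E)
  = xi A B C E.
Proof.
  unfold R_of_xi. rewrite comp_assoc, xin by apply ah_act.
  rewrite <- comp_assoc, ctc, !btc, !aunit, !bid, cid, comp_idr. reflexivity.
Qed.

Lemma L1 a b c d :
  bt (ct (muT a) (muT c)) (ct (muT b) (muT d)) · R (Tt a) (Tt b) (Tt c) (Tt d)
  = xi (F a) (F b) (F c) (F d).
Proof. exact (xi_free_act (F a) (F b) (F c) (F d)). Qed.

Lemma eta0c : T0c · etaT Bot = idm Bot.
Proof. apply (bi_eta0 (bilaws (sbc T))). Qed.
Lemma eta0b : T0b · etaT One = idm One.
Proof. apply (bi_eta0 (bilaws (sbb T))). Qed.

Lemma P_nat a a' b b' c c' d d' (f : Hom a a') (g : Hom b b')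
      (h : Hom c c') (k : Hom d d') :
      R a' b' c' d' · ct (bt f g) (bt h k)
      = bt (ct (Tf f) (Tf h)) (ct (Tf g) (Tf k)) · R a b c d.
Proof.
  unfold R_of_xi. rewrite <- comp_assoc, ctc, !btc, !(mo_eta_nat (monlaws T)).
  rewrite <- !btc, <- ctc, !comp_assoc.
  xrw (F a) (F a') (F b) (F b') (F c) (F c') (F d) (F d') (Tf f) (Tf g) (Tf h) (Tf k).
  reflexivity.
Qed.

Lemma P_unit1 (A B : Alg T) :
      bt (ct T0c (aact A)) (ct T0c (aact B)) · R Bot Bot (acar A) (acar B)
        · ct nu (idm (bo (acar A) (acar B)))
      = bt (lunit_inv (circ D) (acar A)) (lunit_inv (circ D) (acar B)) · lunit (circ D) (bo (acar A) (acar B)).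
Proof.
  unfold R_of_xi. rewrite !comp_assoc.
  xrw (F Bot) (alg_unit (sbc T)) (F Bot) (alg_unit (sbc T)) (F (acar A)) A (F (acar B)) B T0c T0c (aact A) (aact B).
  rewrite <- !comp_assoc, (comp_assoc (ct _ _)), ctc, !btc, eta0c, !aunit, !bid, cid, comp_idl.
  apply (dl_U1 H).
Qed.

Lemma P_unit2 (A B : Alg T) :
      bt (ct (aact A) T0c) (ct (aact B) T0c) · R (acar A) (acar B) Bot Bot
        · ct (idm (bo (acar A) (acar B))) nu
      = bt (runit_inv (circ D) (acar A)) (runit_inv (circ D) (acar B)) · runit (circ D) (bo (acar A) (acar B)).
Proof.
  unfold R_of_xi. rewrite !comp_assoc.
  xrw (F (acar A)) A (F (acar B)) B (F Bot) (alg_unit (sbc T)) (F Bot) (alg_unit (sbc T)) (aact A) (aact B) T0c T0c.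
  rewrite <- !comp_assoc, (comp_assoc (ct _ _)), ctc, !btc, eta0c, !aunit, !bid, cid, comp_idl.
  apply (dl_U2 H).
Qed.

Lemma P_unit3 (A B : Alg T) :
      bt varpi (idm (co (acar A) (acar B)))
        · bt (ct T0b T0b) (ct (aact A) (aact B)) · R One (acar A) One (acar B)
      = lunit_inv (bull D) (co (acar A) (acar B)) · ct (lunit (bull D) (acar A)) (lunit (bull D) (acar B)).
Proof.
  unfold R_of_xi. rewrite <- !comp_assoc, (comp_assoc (bt (ct T0b T0b) _)).
  xrw (F One) (alg_unit (sbb T)) (F (acar A)) A (F One) (alg_unit (sbb T)) (F (acar B)) B T0b (aact A) T0b (aact B).
  rewrite <- !comp_assoc, ctc, !btc, eta0b, !aunit, !bid, cid, comp_idr.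
  apply (dl_U3 H).
Qed.

Lemma P_unit4 (A B : Alg T) :
      bt (idm (co (acar A) (acar B))) varpi
        · bt (ct (aact A) (aact B)) (ct T0b T0b) · R (acar A) One (acar B) One
      = runit_inv (bull D) (co (acar A) (acar B)) · ct (runit (bull D) (acar A)) (runit (bull D) (acar B)).
Proof.
  unfold R_of_xi. rewrite <- !comp_assoc, (comp_assoc (bt (ct _ _) (ct T0b T0b))).
  xrw (F (acar A)) A (F One) (alg_unit (sbb T)) (F (acar B)) B (F One) (alg_unit (sbb T)) (aact A) T0b (aact B) T0b.
  rewrite <- !comp_assoc, ctc, !btc, eta0b, !aunit, !bid, cid, comp_idr.
  apply (dl_U4 H).
Qed.

Lemma P_lift a b c d :
      bt (ct (muT a) (muT c)) (ct (muT b) (muT d)) · R (Tt a) (Tt b) (Tt c) (Tt d)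
        · ct (T2b a b) (T2b c d) · T2c (bo a b) (bo c d)
      = bt (ct (muT a) (muT c)) (ct (muT b) (muT d))
        · bt (T2c (Tt a) (Tt c)) (T2c (Tt b) (Tt d))
        · T2b (co (Tt a) (Tt c)) (co (Tt b) (Tt d)) · Tf (R a b c d).
Proof.
  rewrite L1, btc.
  pose proof (dl_xi_alg H (F a) (F b) (F c) (F d)) as Ha. unfold is_alg_hom in Ha.
  unfold R_of_xi. cbn [acar aact free_alg alg_unit alg_tens] in Ha |- *.
  rewrite (mo_map_comp (monlaws T)), comp_assoc, <- Ha.
  rewrite <- !comp_assoc. f_equal.
  rewrite (bi_T2_nat (bilaws (sbc T))), comp_assoc, ctc.
  rewrite <- !comp_assoc, !(bi_T2_nat (bilaws (sbb T))), !comp_assoc, !btc,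
    !(mo_unit_r (monlaws T)), !bid, !comp_idl. reflexivity.
Qed.

Ltac cnorm := cbn [acar aact free_alg alg_unit alg_tens] in *.
Ltac crw_ t := let Hx := fresh in pose proof t as Hx; cbn [acar aact free_alg alg_unit alg_tens] in Hx |- *; rewrite Hx; clear Hx.
Ltac crwl_ t := let Hx := fresh in pose proof t as Hx; cbn [acar aact free_alg alg_unit alg_tens] in Hx |- *; rewrite <- Hx; clear Hx.
Tactic Notation "crw" constr(t) := crw_ t.
Tactic Notation "crwl" constr(t) := crwl_ t.

Lemma RN a b c d (A B C E : Alg T) (f : Hom (Tt a) (acar A)) (g : Hom (Tt b) (acar B))
  (h : Hom (Tt c) (acar C)) (k : Hom (Tt d) (acar E)) :
  is_alg_hom (F a) A f -> is_alg_hom (F b) B g -> is_alg_hom (F c) C h -> is_alg_hom (F d) E k ->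
  bt (ct f h) (ct g k) · R a b c d
  = xi A B C E · ct (bt (f · etaT a) (g · etaT b)) (bt (h · etaT c) (k · etaT d)).
Proof.
  intros Hf Hg Hh Hk. unfold R_of_xi. rewrite comp_assoc.
  pose proof (xin (F a) A (F b) B (F c) C (F d) E f g h k Hf Hg Hh Hk) as Hx.
  cnorm. rewrite Hx, <- comp_assoc, ctc, !btc. reflexivity.
Qed.

Lemma ah_actens a c : is_alg_hom (F (co (Tt a) (Tt c))) (actens (F a) (F c)) (ct (muT a) (muT c) · T2c (Tt a) (Tt c)).
Proof. exact (ah_act (actens (F a) (F c))). Qed.
Lemma ah_abtens a c : is_alg_hom (F (bo (Tt a) (Tt c))) (abtens (F a) (F c)) (bt (muT a) (muT c) · T2b (Tt a) (Tt c)).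
Proof. exact (ah_act (abtens (F a) (F c))). Qed.
Lemma unit_ctens a c : (ct (muT a) (muT c) · T2c (Tt a) (Tt c)) · etaT (co (Tt a) (Tt c)) = idm _.
Proof. exact (aunit (actens (F a) (F c))). Qed.
Lemma unit_btens a c : (bt (muT a) (muT c) · T2b (Tt a) (Tt c)) · etaT (bo (Tt a) (Tt c)) = idm _.
Proof. exact (aunit (abtens (F a) (F c))). Qed.

Lemma P_1' a b c d x y :
      bt (cassoc (Tt a) (Tt c) (Tt x)) (cassoc (Tt b) (Tt d) (Tt y))
        · bt (ct (ct (muT a) (muT c)) (idm (Tt x))) (ct (ct (muT b) (muT d)) (idm (Tt y)))
        · bt (ct (T2c (Tt a) (Tt c)) (idm (Tt x))) (ct (T2c (Tt b) (Tt d)) (idm (Tt y)))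
        · R (co (Tt a) (Tt c)) (co (Tt b) (Tt d)) x y
        · ct (R a b c d) (idm (bo x y))
      = bt (ct (idm (Tt a)) (ct (muT c) (muT x))) (ct (idm (Tt b)) (ct (muT d) (muT y)))
        · bt (ct (idm (Tt a)) (T2c (Tt c) (Tt x))) (ct (idm (Tt b)) (T2c (Tt d) (Tt y)))
        · R a b (co (Tt c) (Tt x)) (co (Tt d) (Tt y))
        · ct (idm (bo a b)) (R c d x y)
        · cassoc (bo a b) (bo c d) (bo x y).
Proof.
  rewrite <- (comp_assoc (bt (cassoc _ _ _) _)), btc, !ctc, !comp_idl.
  rewrite <- (comp_assoc (bt (cassoc _ _ _) _)).
  crw (RN _ _ _ _ _ _ _ _ _ _ _ _ (ah_actens a c) (ah_actens b d) (ah_id (F x)) (ah_id (F y))).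
  rewrite !unit_ctens, !comp_idl, bid.
  rewrite btc, !ctc, !comp_idl.
  crw (RN _ _ _ _ _ _ _ _ _ _ _ _ (ah_id (F a)) (ah_id (F b)) (ah_actens c x) (ah_actens d y)).
  rewrite !unit_ctens, !comp_idl, bid.
  transitivity (bt (cassoc (Tt a) (Tt c) (Tt x)) (cassoc (Tt b) (Tt d) (Tt y))
     · xi (actens (F a) (F c)) (actens (F b) (F d)) (F x) (F y)
     · ct (xi (F a) (F b) (F c) (F d)) (idm (bo (Tt x) (Tt y)))
     · ct (ct (bt (etaT a) (etaT b)) (bt (etaT c) (etaT d))) (bt (etaT x) (etaT y))).
  { unfold R_of_xi. cnorm. rewrite <- !comp_assoc. f_equal. f_equal.
    rewrite !ctc, !comp_idl, !comp_idr. reflexivity. }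
  transitivity (xi (F a) (F b) (actens (F c) (F x)) (actens (F d) (F y))
     · ct (idm (bo (Tt a) (Tt b))) (xi (F c) (F d) (F x) (F y))
     · ct (bt (etaT a) (etaT b)) (ct (bt (etaT c) (etaT d)) (bt (etaT x) (etaT y)))
     · cassoc (bo a b) (bo c d) (bo x y)).
  2:{ unfold R_of_xi. cnorm. rewrite <- !comp_assoc. f_equal. f_equal.
    rewrite !comp_assoc, !ctc, !comp_idl, !comp_idr. reflexivity. }
  pose proof (dl_A1 H (F a) (F b) (F c) (F d) (F x) (F y)) as HA. cnorm.
  rewrite <- !comp_assoc, <- (ml_assoc_nat (mlaws (circ D))), !comp_assoc, <- HA.
  reflexivity.
Qed.

Lemma btc_l {x x' x'' y} (f : Hom x x') (f' : Hom x' x'') :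
  bt (f' · f) (idm y) = bt f' (idm y) · bt f (idm y).
Proof. rewrite btc, comp_idl. reflexivity. Qed.
Lemma btc_r {x x' x'' y} (f : Hom x x') (f' : Hom x' x'') :
  bt (idm y) (f' · f) = bt (idm y) f' · bt (idm y) f.
Proof. rewrite btc, comp_idl. reflexivity. Qed.
Lemma eta2b x y : T2b x y · etaT (bo x y) = bt (etaT x) (etaT y).
Proof. apply (bi_eta2 (bilaws (sbb T))). Qed.

Lemma P_2' x a y b c d :
      bassoc (co (Tt x) (Tt y)) (co (Tt a) (Tt b)) (co (Tt c) (Tt d))
        · bt (bt (ct (muT x) (muT y)) (ct (muT a) (muT b))) (idm (co (Tt c) (Tt d)))
        · bt (R (Tt x) (Tt a) (Tt y) (Tt b)) (idm (co (Tt c) (Tt d)))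
        · bt (ct (T2b x a) (T2b y b)) (idm (co (Tt c) (Tt d)))
        · R (bo x a) c (bo y b) d
      = bt (idm (co (Tt x) (Tt y))) (bt (ct (muT a) (muT b)) (ct (muT c) (muT d)))
        · bt (idm (co (Tt x) (Tt y))) (R (Tt a) (Tt c) (Tt b) (Tt d))
        · bt (idm (co (Tt x) (Tt y))) (ct (T2b a c) (T2b b d))
        · R x (bo a c) y (bo b d)
        · ct (bassoc x a c) (bassoc y b d).
Proof.
  transitivity (bassoc (co (Tt x) (Tt y)) (co (Tt a) (Tt b)) (co (Tt c) (Tt d))
     · bt (xi (F x) (F a) (F y) (F b)) (idm (co (Tt c) (Tt d)))
     · xi (abtens (F x) (F a)) (F c) (abtens (F y) (F b)) (F d)
     · ct (bt (bt (etaT x) (etaT a)) (etaT c)) (bt (bt (etaT y) (etaT b)) (etaT d))).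
  { rewrite <- !comp_assoc, (comp_assoc (bt (R _ _ _ _) _)), btc, (comp_assoc (bt (bt _ _) _)), btc, !comp_idl.
    rewrite (comp_assoc (bt (ct (muT _) _) _)), L1, btc_l, <- cid.
    rewrite <- comp_assoc.
    crw (RN _ _ _ _ _ _ _ _ _ _ _ _ (ah_T2b x a) (ah_id (F c)) (ah_T2b y b) (ah_id (F d))).
    rewrite !eta2b, !comp_idl. reflexivity. }
  transitivity (bt (idm (co (Tt x) (Tt y))) (xi (F a) (F c) (F b) (F d))
     · xi (F x) (abtens (F a) (F c)) (F y) (abtens (F b) (F d))
     · ct (bt (etaT x) (bt (etaT a) (etaT c))) (bt (etaT y) (bt (etaT b) (etaT d)))
     · ct (bassoc x a c) (bassoc y b d)).
  2:{ rewrite <- !comp_assoc, (comp_assoc (bt _ (R _ _ _ _))), btc, (comp_assoc (bt _ (bt _ _))), btc, !comp_idl.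
    rewrite (comp_assoc (bt _ (ct (muT _) _))), L1, btc_r, <- cid.
    rewrite <- !comp_assoc, (comp_assoc (bt _ (ct (T2b _ _) _))).
    crw (RN _ _ _ _ _ _ _ _ _ _ _ _ (ah_id (F x)) (ah_T2b a c) (ah_id (F y)) (ah_T2b b d)).
    rewrite !eta2b, !comp_idl, !comp_assoc. reflexivity. }
  pose proof (dl_A2 H (F x) (F a) (F y) (F b) (F c) (F d)) as HA. cnorm.
  rewrite HA, <- !comp_assoc. f_equal. f_equal. rewrite !ctc.
  rewrite <- !(ml_assoc_nat (mlaws (bull D))). reflexivity.
Qed.
End Proof.

Theorem mainTheorem3 (D : Preduoidal) (T : SepOpMonad D) (xi : XiType T)
    (nu : Hom (munit (circ D)) (tens (bull D) (munit (circ D)) (munit (circ D))))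
    (varpi : Hom (tens (circ D) (munit (bull D)) (munit (bull D))) (munit (bull D)))
    (iota : Hom (munit (circ D)) (munit (bull D))) :
  DuoidalLift xi nu varpi iota -> RMatrix (R_of_xi xi) nu varpi iota.
Proof.
  intro H. constructor.
  - exact (dl_units H).
  - intros; eapply P_nat; try exact H.
  - intros; eapply P_unit1; try exact H.
  - intros; eapply P_unit2; try exact H.
  - intros; eapply P_unit3; try exact H.
  - intros; eapply P_unit4; try exact H.
  - intros; eapply P_lift; try exact H.
  - intros; eapply P_1'; try exact H.
  - intros; eapply P_2'; try exact H.
Qed.
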